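(* Let $U\subset\mathbb{C}\setminus\{0\}$ be a connected domain and let $f_1,f_2$ be complex-differentiable and nowhere vanishing on $U$ such that $\mathcal{A}[f_1]=f_2$ and $\mathcal{A}[f_2]=f_1$ on $U$. Then $f_2-f_1$ is constant on $U$.
   Context: For a complex-differentiable, nowhere-vanishing function $f$ on a domain $U\subset\mathbb{C}\setminus\{0\}$, the dual logarithmic derivative operator is $\mathcal{A}[f](x)=\dfrac{x f'(x)}{f(x)}$ (equivalently $\mathrm{d}\ln f/\mathrm{d}\ln x$ for fixed analytic branches of the logarithms). *)

(* Defs.v *)
(* R[i] (mathcomp-real-closed `complex`) is a numFieldType, hence a normed
   space over itself; `derivable f z 1` over the scalar field R[i] is exactly
   complex differentiability at z, and 'D_1 f is the complex derivative. *)
From HB Require Import structures.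
From mathcomp Require Import all_boot all_order all_algebra.
From mathcomp Require Import complex.
From mathcomp Require Import all_classical all_reals all_analysis.
Set Implicit Arguments. Unset Strict Implicit. Unset Printing Implicit Defensive.
Import Order.TTheory GRing.Theory Num.Theory.
Import numFieldNormedType.Exports.
Local Open Scope ring_scope.
Local Open Scope classical_set_scope.

Definition dual_logder (R : rcfType) (f : R[i]^o -> R[i]^o) (x : R[i]^o) : R[i]^o :=
  x * 'D_1 f x / f x.

(* Main.v *)
Require Import Defs.
From HB Require Import structures.
From mathcomp Require Import all_boot all_order all_algebra.
From mathcomp Require Import complex.
From mathcomp Require Import all_classical all_reals all_analysis.
From mathcomp Require Import ring.
Import Order.TTheory GRing.Theory Num.Theory.
Import numFieldNormedType.Exports.
Local Open Scope ring_scope.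
Local Open Scope classical_set_scope.
Section Aux.
Variable R : realType.
Local Notation C := (R[i]^o).

Lemma Cnorm_real (s : R) : `|(s%:C)%C : C| = (`|s|)%:C%C.
Proof. by rewrite normc_def /= expr0n addr0 sqrtr_sqr. Qed.

Lemma Cpos_real (e : C) : 0 < e -> e = (complex.Re e)%:C%C.
Proof. by case: e => a b; rewrite ltcE /= => /andP[/eqP -> _]. Qed.

Lemma Cnorm_realE (z : C) : `|z| = (complex.Re `|z|)%:C%C.
Proof. by rewrite normc_def. Qed.

Lemma Ccont (v : C) : (fun s : R => (s%:C)%C * v) @ (nbhs (0:R)) --> (0:C).
Proof.
apply/(@cvgr0Pnorm_le _ C) => e e0.
have eE := @Cpos_real e e0.
set a := complex.Re e in eE.
have a0 : 0 < a by move: e0; rewrite eE ltcR.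
set nv := complex.Re `|v|.
have nv0 : 0 <= nv by rewrite /nv normc_def /= sqrtr_ge0.
have d0 : 0 < a / (nv + 1) by rewrite divr_gt0 // ltr_wpDl.
apply: filterS (nbhs0_lt d0) => s /= hs.
rewrite normrM Cnorm_real [`|v|]Cnorm_realE -/nv -rmorphM /= eE lecR.
rewrite ltr_pdivlMr ?ltr_wpDl // in hs.
apply: le_trans (ltW hs); rewrite ler_wpM2l // lerDl //.
Qed.

Lemma ReB (x y : C) : complex.Re (x - y) = complex.Re x - complex.Re y.
Proof. by case: x; case: y. Qed.

Lemma core (g : C -> C) (q v c : C) : derivable g q 1 -> 'D_1 g q = 0 ->
  (fun s : R => s^-1 *: (complex.Re (c * g (q + (s%:C)%C * v)) - complex.Re (c * g q)))
     @ 0^' --> (0:R).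
Proof.
move=> dg D0.
have H : (fun h : C => h^-1 *: ((g \o shift q) (h *: 1) - g q)) @ 0^' --> (0:C).
  by move: dg D0; rewrite /derivable /derive => dg D0; rewrite D0 in dg.
have [->|v0] := eqVneq v 0.
  under eq_fun do rewrite mulr0 addr0 subrr scaler0.
  exact: cvg_cst.
apply/(@cvgr0Pnorm_le _ R^o) => e e0.
set K : C := `|c| * `|v|.
have K0 : 0 <= K by rewrite mulr_ge0.
have eps0 : 0 < (e%:C)%C / (K + 1) by rewrite divr_gt0 ?ltcR // ltr_wpDl.
move/(@cvgr0Pnorm_le _ C): H => /(_ _ eps0) Hn.
have Hn' : \forall k \near (0:C), k != 0 ->
   `|k^-1 *: ((g \o shift q) (k *: 1) - g q)| <= (e%:C)%C / (K + 1) := Hn.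
have Hs : \forall s \near (0:R), (s%:C)%C * v != 0 ->
   `|((s%:C)%C * v)^-1 *: ((g \o shift q) (((s%:C)%C * v) *: 1) - g q)| <= (e%:C)%C / (K + 1)
   := Ccont v _ Hn'.
have : \forall s \near (0:R), s != 0 -> `|s^-1 *: (complex.Re (c * g (q + (s%:C)%C * v)) - complex.Re (c * g q))| <= e.
  apply: filterS Hs => s Ps s0.
  have k0 : (s%:C)%C * v != 0 by rewrite mulf_neq0 // eq_complex /= negb_and s0.
  have {Ps} := Ps k0.
  set k := (s%:C)%C * v.
  rewrite /= -ReB -mulrBr.
  have -> : k%:A = k by rewrite /GRing.scale /= mulr1.
  rewrite addrC.
  set d := g (q + k) - g q.
  rewrite [k + q]addrC [- g q + _]addrC -/d.
  move=> Pd.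
  have knz : `|k| != 0 by rewrite normr_eq0.
  have h1 : (`|complex.Re (c * d)|)%:C%C <= `|c| * `|d| by rewrite -normrM normc_ge_Re.
  have Pd' : `|k|^-1 * `|d| <= (e%:C)%C / (K + 1).
    by move: Pd; rewrite normrZ normrV ?unitfE // -normr_eq0.
  have h2 : `|d| <= `|k| * ((e%:C)%C / (K + 1)).
    by rewrite -{1}(mulVKf knz `|d|) ler_wpM2l.
  rewrite -lecR normrM rmorphM /=.
  apply: (le_trans (ler_wpM2l _ (le_trans h1 (ler_wpM2l (normr_ge0 c) h2)))).
    by rewrite lecR.
  have sn : (`|s|)%:C%C != 0 by rewrite eq_complex /= negb_and normr_eq0 s0.
  rewrite normrM Cnorm_real normrV ?unitfE // fmorphV /=.
  have -> : ((`|s|)%:C%C)^-1 * (`|c| * ((`|s|)%:C%C * `|v| * ((e%:C)%C / (K + 1))))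
     = (e%:C)%C * (K / (K + 1)).
    by rewrite mulrCA -!mulrA mulKf //; ring.
  rewrite ler_piMr ?lecR ?ltW //.
  by rewrite ltr_pdivrMr ?mul1r ?ltrDl ?ltr01 // ltr_wpDl.
move=> H; exact: H.
Qed.
End Aux.
Section Loc.
Variable R : realType.
Local Notation C := (R[i]^o).

Lemma loc (g : C -> C) (D : set C) (p r : C) :
  (forall z, D z -> derivable g z 1) -> (forall z, D z -> 'D_1 g z = 0) ->
  ball p r `<=` D -> forall w, ball p r w -> g w = g p.
Proof.
move=> dg D0 sub w pw.
set v := w - p.
have seg : forall t : R, t \in `[0, 1]%R -> D (p + (t%:C)%C * v).
  move=> t t01; apply: sub; rewrite /ball /=.
  rewrite opprD addrA subrr add0r normrN normrM Cnorm_real /v distrC.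
  apply: (le_lt_trans _ (pw)); rewrite ler_piMl //.
  move: t01; rewrite in_itv /= => /andP[t0 t1].
  by rewrite lecR ger0_norm.
have key : forall c, complex.Re (c * g w) = complex.Re (c * g p).
  move=> c.
  pose phi := fun t : R => complex.Re (c * g (p + (t%:C)%C * v)).
  have der : forall t : R, t \in `[0, 1]%R -> is_derive t (1:R) phi 0.
    move=> t t01.
    have := @core R g _ v c (dg _ (seg t t01)) (D0 _ (seg t t01)).
    set q := p + (t%:C)%C * v.
    have -> : (fun s : R => s^-1 *: (complex.Re (c * g (q + (s%:C)%C * v)) - complex.Re (c * g q)))
       = (fun h : R => h^-1 *: ((phi \o shift t) (h *: 1) - phi t)).
      apply/funext => h /=; rewrite /phi /q; congr (_ *: (complex.Re (c * g _) - _)).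
      by rewrite /GRing.scale /= mulr1 rmorphD /=; ring.
    move=> Hc; apply: DeriveDef; first exact: cvgP Hc.
    exact: cvg_lim Hc.
  have cont := @derivable_within_continuous R R phi `[0, 1]%R
     (fun x hx => @ex_derive _ _ _ _ _ _ _ (der x hx)).
  have [x _] := @MVT_segment R phi (fun _ => 0) 0 1 ler01
     (fun x hx => der x (subset_itv_oo_cc hx)) cont.
  rewrite mul0r => /eqP; rewrite subr_eq0 => /eqP.
  by rewrite /phi rmorph1 rmorph0 mul1r mul0r addr0 /v addrC subrK.
have h1 := key 1; have h2 := key 'i%C.
rewrite !mul1r in h1.
rewrite ![('i%C * _)]mulrC !ReiNIm in h2.
apply/eqP; rewrite eq_complex h1 eqxx /=.
by move/oppr_inj: h2 => ->.
Qed.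
End Loc.

Theorem lemma4p1 (R : realType) (U : set R[i]^o) (f1 f2 : R[i]^o -> R[i]^o) :
  open U -> connected U -> U `<=` [set z | z != 0] ->
  (forall z, U z -> derivable f1 z 1) ->
  (forall z, U z -> derivable f2 z 1) ->
  (forall z, U z -> f1 z != 0) ->
  (forall z, U z -> f2 z != 0) ->
  (forall z, U z -> dual_logder f1 z = f2 z) ->
  (forall z, U z -> dual_logder f2 z = f1 z) ->
  exists c : R[i]^o, forall z, U z -> f2 z - f1 z = c.
Proof.
move=> oU cU U0 d1 d2 n1 n2 h1 h2.
pose g := f2 - f1.
have dg : forall z, U z -> derivable g z 1 by move=> z Uz; exact: derivableB (d2 _ Uz) (d1 _ Uz).
have D0 : forall z, U z -> 'D_1 g z = 0.
  move=> z Uz; rewrite (deriveB (d2 _ Uz) (d1 _ Uz)).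
  have zn : z != 0 := U0 _ Uz.
  have e1 : z * 'D_1 f1 z = f2 z * f1 z.
    by rewrite -(h1 _ Uz) /dual_logder divfK // n1.
  have e2 : z * 'D_1 f2 z = f1 z * f2 z by rewrite -(h2 _ Uz) /dual_logder divfK // n2.
  move: ('D_1 f1 z) ('D_1 f2 z) e1 e2 => a b e1 e2.
  apply/eqP; rewrite subr_eq0; apply/eqP.
  by apply: (mulfI zn); rewrite e1 e2 mulrC.
have locc : forall z, U z -> exists2 r : R[i]^o, 0 < r & (ball z r `<=` U /\ forall w, ball z r w -> g w = g z).
  move=> z Uz.
  have : nbhs z U by move: oU; rewrite openE => /(_ z Uz).
  move=> /nbhs_ballP [r r0 sub]; exists r => //; split => //.
  exact: loc dg D0 sub.
have [[z0 Uz0]|noU] := pselect (exists z, U z); last first.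
  by exists 0 => z Uz; exfalso; apply: noU; exists z.
exists (g z0) => z Uz.
set B := [set z | U z /\ g z = g z0].
have oB : open B.
  rewrite openE => y [Uy gy]; apply/nbhs_ballP.
  have [r r0 [sub hr]] := locc y Uy.
  exists r => // w yw; split; first exact: sub.
  by rewrite hr.
have oN : open [set z | U z /\ g z != g z0].
  rewrite openE => y [Uy gy]; apply/nbhs_ballP.
  have [r r0 [sub hr]] := locc y Uy.
  exists r => // w yw; split; first exact: sub.
  by rewrite hr.
have BU : B = U.
  apply: cU.
  - by exists z0.
  - exists B => //; apply/seteqP; split => y /=; [by case=> Uy gy; split|by case].
  - exists (~` [set z | U z /\ g z != g z0]); first exact: open_closedC.
    apply/seteqP; split => y /=.
      by case=> Uy gy; split => // -[_]; rewrite gy eqxx.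
    case=> Uy ngy; split => //; apply/eqP; apply: contraT => hne.
    by case: ngy; split.
have : B z by rewrite BU.
by case=> _ <-.
Qed.
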